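(* For all $\vec z,\vec a\in\mathbb{C}^n$, \[ \log\!\Big(\frac{1}{|\langle \pi_{\vec z}|\pi_{\vec a}\rangle|^2}\Big)\;\le\; d_{\tan}(|\pi_{\vec z}\rangle,|\pi_{\vec a}\rangle)^2\;\le\;\frac{1}{|\langle \pi_{\vec z}|\pi_{\vec a}\rangle|^2}-1, \] with the conventions that $\log(1/0)=1/0=+\infty$ and that a summand of $d_{\tan}^2$ whose denominator vanishes equals $+\infty$.
   Context: For $\vec z\in\mathbb{C}^n$, $|\pi_{\vec z}\rangle=\bigotimes_{i=1}^n \frac{|0\rangle+z_i|1\rangle}{\sqrt{1+|z_i|^2}}$ is an $n$-qubit pure product state. The tangent distance is $d_{\tan}(|\pi_{\vec z}\rangle,|\pi_{\vec a}\rangle)=\Big(\sum_{i=1}^n\Big|\frac{z_i-a_i}{1+z_i^*a_i}\Big|^2\Big)^{1/2}$, where $z^*$ denotes complex conjugation. *)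

(* Defs.v *)
From HB Require Import structures.
From mathcomp Require Import all_boot all_order all_algebra.
From mathcomp Require Import all_classical all_reals.
From mathcomp Require Import ereal exp.
From mathcomp.real_closed Require Import complex.
Set Implicit Arguments. Unset Strict Implicit. Unset Printing Implicit Defensive.
Import Order.TTheory GRing.Theory Num.Theory.
Local Open Scope ring_scope.
Local Open Scope complex_scope.

Section Defs.
Variable R : realType.

Definition norm2 (z : R[i]) : R := let: x +i* y := z in x ^+ 2 + y ^+ 2.

Definition qamp (z : R[i]) (b : 'I_2) : R[i] :=
  ((Num.sqrt (1 + norm2 z))^-1)%:C * (if val b == 0%N then 1 else z).

(* the n-qubit product state |pi_z> = tensor_i (|0> + z_i|1>)/sqrt(1+|z_i|^2),
   as amplitudes indexed by computational basis strings b : 'I_n -> {0,1} *)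
Definition pstate (n : nat) (z : 'I_n -> R[i]) : {ffun 'I_n -> 'I_2} -> R[i] :=
  fun b => \prod_(i < n) qamp (z i) (b i).

Definition braket (n : nat) (psi phi : {ffun 'I_n -> 'I_2} -> R[i]) : R[i] :=
  \sum_(b : {ffun 'I_n -> 'I_2}) (psi b)^* * phi b.

Definition overlap2 (n : nat) (z a : 'I_n -> R[i]) : R :=
  norm2 (braket (pstate z) (pstate a)).

Definition dtan2 (n : nat) (z a : 'I_n -> R[i]) : \bar R :=
  (\sum_(i < n)
     (if (1 + (z i)^* * a i == 0)%R then +oo
      else (norm2 (z i - a i) / norm2 (1 + (z i)^* * a i))%R%:E))%E.

Definition log_inv (p : R) : \bar R := if p == 0 then +oo%E else (ln (p^-1))%:E.

Definition inv_m1 (p : R) : \bar R := if p == 0 then +oo%E else (p^-1 - 1)%:E.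

End Defs.

(* Main.v *)
Require Import Defs.
From HB Require Import structures.
From mathcomp Require Import all_boot all_order all_algebra.
From mathcomp Require Import all_classical all_reals.
From mathcomp Require Import ereal exp.
From mathcomp.real_closed Require Import complex.
From mathcomp Require Import ring lra.
Import Order.TTheory GRing.Theory Num.Theory.
Local Open Scope ring_scope.
Local Open Scope complex_scope.
Section S.
Variable R : realType.
Lemma norm2M (x y : R[i]) : norm2 (x * y) = norm2 x * norm2 y.
Proof. case: x => a b; case: y => c d; simpc; rewrite /norm2; ring. Qed.
Lemma norm2C (r : R) : norm2 (r%:C) = r ^+ 2.
Proof. by rewrite /norm2 /=; ring. Qed.
Lemma norm2_ge0 (x : R[i]) : 0 <= norm2 x.
Proof. case: x => a b; rewrite /norm2; nra. Qed.

Lemma key (x y : R[i]) : (1 + norm2 x) * (1 + norm2 y) = norm2 (1 + x^* * y) + norm2 (x - y).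
Proof. case: x => a b; case: y => c d; simpc; rewrite /norm2 /=; ring. Qed.

Lemma fact1 (x y : R[i]) : \sum_(c < 2) (qamp x c)^* * qamp y c =
  ((Num.sqrt (1 + norm2 x))^-1 * (Num.sqrt (1 + norm2 y))^-1)%:C * (1 + x^* * y).
Proof.
have cr : forall r : R, (r%:C)^* = r%:C by move=> r; rewrite /conjc /= oppr0.
have c1 : (1 : R[i])^* = 1 by rewrite /conjc /= oppr0.
rewrite !big_ord_recl big_ord0 /qamp /=.
set s := (Num.sqrt _)^-1; set t := (Num.sqrt _)^-1.
clearbody s t; case: x => a b; case: y => c d.
rewrite /conjc /=.
rewrite -[1 : R[i]]/(1 +i* 0)%C. rewrite -[0 : R[i]]/(0 +i* 0)%C.
simpc; congr (_ +i* _); ring.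
Qed.

Definition pfac (x y : R[i]) : R := norm2 (1 + x^* * y) / ((1 + norm2 x) * (1 + norm2 y)).

Lemma norm2_fact (x y : R[i]) : norm2 (\sum_(c < 2) (qamp x c)^* * qamp y c) = pfac x y.
Proof.
rewrite fact1 norm2M norm2C /pfac mulrC; congr (_ * _).
rewrite exprMn !exprVn !sqr_sqrtr ?addr_ge0 ?norm2_ge0 // invfM //.
Qed.

Lemma overlapE n (z a : 'I_n -> R[i]) : overlap2 z a = \prod_(i < n) pfac (z i) (a i).
Proof.
rewrite /overlap2 /braket /pstate.
under eq_bigr do rewrite rmorph_prod -big_split /=.
rewrite -(bigA_distr_bigA (fun i c => (qamp (z i) c)^* * qamp (a i) c)).
rewrite (big_morph (@norm2 R) norm2M (_ : norm2 1 = 1)); last by rewrite /norm2 /=; ring.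
by apply: eq_bigr => i _; rewrite norm2_fact.
Qed.
Lemma ind1 (I : Type) (r : seq I) (f : I -> R) : (forall i, 0 <= f i) ->
  1 <= \prod_(i <- r) (1 + f i) /\
  ln (\prod_(i <- r) (1 + f i)) <= \sum_(i <- r) f i /\
  \sum_(i <- r) f i <= \prod_(i <- r) (1 + f i) - 1.
Proof.
move=> f0; elim: r => [|x r [h1 [h2 h3]]].
  by rewrite !big_nil ln1 lexx; split => //; split => //; rewrite subrr.
rewrite !big_cons; have fx := f0 x.
have Pp : 0 < \prod_(i <- r) (1 + f i) by lra.
split; first nra.
split; last nra.
rewrite lnM ?posrE //; last lra.
have := le_ln1Dx (_ : -1 < f x); lra.
Qed.

Lemma pfacE (x y : R[i]) : 1 + x^* * y != 0 ->
  pfac x y = (1 + norm2 (x - y) / norm2 (1 + x^* * y))^-1.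
Proof.
move=> h; rewrite /pfac key.
have hN : 0 < norm2 (1 + x^* * y).
  rewrite lt_def norm2_ge0 andbT; apply/negP => /eqP h2; move: h.
  move: h2; case: (1 + _) => u v; rewrite /norm2 => h2.
  have -> : u = 0 by nra. have -> : v = 0 by nra. by rewrite eqxx.
move: hN; have := norm2_ge0 (x - y).
set N := norm2 _ ; set M := norm2 _ => hM hN.
field; apply/andP; split; apply/eqP; lra.
Qed.
End S.
Arguments pfac {R}.

Theorem lemma3p5 (R : realType) (n : nat) (z a : 'I_n -> R[i]) :
  (log_inv (overlap2 z a) <= dtan2 z a <= inv_m1 (overlap2 z a))%E.
Proof.
rewrite /log_inv /inv_m1 overlapE.
case: (pickP (fun i => 1 + (z i)^* * a i == 0)) => [i0 /eqP hi0|hall].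
  have -> : \prod_(i < n) pfac (z i) (a i) = 0.
    by rewrite (bigD1 i0) //= /pfac hi0 /norm2 /= expr0n /= addr0 !mul0r.
  rewrite eqxx.
  have -> : dtan2 z a = +oo%E.
    rewrite /dtan2; apply/esum_eqyP; first by move=> i _; case: ifP.
    by exists i0; rewrite mem_index_enum hi0 eqxx.
  by rewrite lexx.
set t := fun i => norm2 (z i - a i) / norm2 (1 + (z i)^* * a i).
have -> : dtan2 z a = (\sum_(i < n) t i)%:E.
  rewrite /dtan2 -sumEFin; apply: eq_bigr => i _; by rewrite hall.
have -> : \prod_(i < n) pfac (z i) (a i) = (\prod_(i < n) (1 + t i))^-1.
  rewrite -prodfV; apply: eq_bigr => i _; rewrite pfacE //; exact/negbT/hall.
have t0 : forall i, 0 <= t i by move=> i; apply: divr_ge0; apply: norm2_ge0.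
have [h1 [h2 h3]] := @ind1 R _ (index_enum 'I_n) t t0.
rewrite invr_eq0 ifN; last by apply/eqP => h; move: h1; rewrite h; lra.
rewrite invrK ifN; last by apply/eqP => h; move: h1; rewrite h; lra.
by rewrite !lee_fin; apply/andP; split; [exact: h2 | exact: h3].
Qed.
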